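(* Let $N_{\rm S}\ge0$, $r=\sinh^{-1}\sqrt{N_{\rm S}}$, $\kappa\ge0$, $n_{\rm B}\ge\max\{\kappa-1,0\}$. Let the two-mode squeezed vacuum $\hat S_2(r)|0\rangle_S|0\rangle_A$ be prepared and mode $S$ sent through $\mathcal N_{\kappa,n_{\rm B}}$ (output mode $R$), while $A$ is kept noiselessly. Perform a Bell measurement: interfere $R$ and $A$ on a balanced beamsplitter and homodyne the $\hat p$ quadrature of one output port and the $\hat q$ quadrature of the other. The classical Fisher information with respect to $n_{\rm B}$ of the joint outcome is $$\mathcal I_{\rm Bell}=\frac{1}{\Big(n_{\rm B}+\kappa N_{\rm S}-2\sqrt{\kappa N_{\rm S}(N_{\rm S}+1)}+N_{\rm S}+1\Big)^2}.$$
   Context: $\hat S_2(r)=\exp[-r(\hat a_S\hat a_A-\hat a_S^\dagger\hat a_A^\dagger)]$; the signal mode of $\hat S_2(r)|0,0\rangle$ has mean photon number $\sinh^2r$. Quadratures are $\hat q=\hat a+\hat a^\dagger$, $\hat p=-i(\hat a-\hat a^\dagger)$ (vacuum covariance is the identity). $\mathcal N_{\kappa,n_{\rm B}}$ is the single-mode phase-covariant bosonic Gaussian channel mapping quadrature mean $\bar x\mapsto\sqrt\kappa\,\bar x$ and covariance $V\mapsto\kappa V+(2n_{\rm B}+1-\kappa)I_2$. Classical Fisher information of an outcome density $p(x|\theta)$ is $\int(\partial_\theta\log p)^2p\,dx$. *)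

(* Defs.v *)
From HB Require Import structures.
From mathcomp Require Import all_boot all_order all_algebra.
From mathcomp Require Import all_classical all_reals all_analysis.
Set Implicit Arguments. Unset Strict Implicit. Unset Printing Implicit Defensive.
Import Order.TTheory GRing.Theory Num.Theory.
Import numFieldNormedType.Exports.
Local Open Scope ring_scope.

Section Bell.
Variable R : realType.

Definition sinhR (x : R) : R := (expR x - expR (- x)) / 2.
Definition coshR (x : R) : R := (expR x + expR (- x)) / 2.

(* Quadrature ordering for two modes: (q_1, p_1, q_2, p_2); vacuum covariance = identity.
   Covariance of the two-mode squeezed vacuum S_2(r)|0,0>, modes (S, A):
   [[cosh 2r I, sinh 2r Z], [sinh 2r Z, cosh 2r I]], Z = diag(1,-1). *)
Definition tmsv_cov (r : R) : 'M[R]_4 :=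
  \matrix_(i < 4, j < 4)
    if i == j then coshR (2 * r)
    else if (((i : nat) + 2 == j) || ((j : nat) + 2 == i))%N then
      (if odd i then - sinhR (2 * r) else sinhR (2 * r))
    else 0.

Definition chanX (kappa : R) : 'M[R]_4 :=
  \matrix_(i < 4, j < 4) if i == j then (if (i < 2)%N then Num.sqrt kappa else 1) else 0.
Definition chanY (kappa nB : R) : 'M[R]_4 :=
  \matrix_(i < 4, j < 4) if (i == j) && (i < 2)%N then 2 * nB + 1 - kappa else 0.
Definition channel_first (kappa nB : R) (V : 'M[R]_4) : 'M[R]_4 :=
  chanX kappa *m V *m (chanX kappa)^T + chanY kappa nB.

(* Balanced beamsplitter on modes (R, A): output port 1 = (R + A)/sqrt 2,
   output port 2 = (R - A)/sqrt 2 (symplectic matrix on quadratures). *)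
Definition bs_mat : 'M[R]_4 :=
  \matrix_(i < 4, j < 4)
    if odd i == odd j then
      (if ((2 <= i) && (2 <= j))%N then -1 else 1) / Num.sqrt 2
    else 0.

(* Homodyne detection of p on port 1 (index 1) and q on port 2 (index 2). *)
Definition bell_select : 'M[R]_(2, 4) :=
  \matrix_(i < 2, j < 4) if ((i : nat).+1 == j)%N then 1 else 0.

(* Covariance of the joint (p_1, q_2) homodyne outcome (the mean is zero throughout). *)
Definition bell_outcome_cov (r kappa nB : R) : 'M[R]_2 :=
  bell_select *m (bs_mat *m channel_first kappa nB (tmsv_cov r) *m bs_mat^T)
    *m bell_select^T.

Definition gauss2 (S : 'M[R]_2) (x : R * R) : R :=
  let v : 'rV[R]_2 := \row_(k < 2) (if k == 0 then x.1 else x.2) in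
  expR (- ((v *m invmx S *m v^T) 0 0) / 2) / (2 * pi * Num.sqrt (\det S)).

Definition bell_density (r kappa nB : R) (x : R * R) : R :=
  gauss2 (bell_outcome_cov r kappa nB) x.

Definition fisher_bell (r kappa nB : R) : \bar R :=
  (\int[(@lebesgue_measure R) \x (@lebesgue_measure R)]_(x in [set: R * R])
     ((derive1 (fun t => ln (bell_density r kappa t x)) nB) ^+ 2
       * bell_density r kappa nB x)%:E)%E.

End Bell.

(* Main.v *)
Require Import Defs.
From HB Require Import structures.
From mathcomp Require Import all_boot all_order all_algebra.
From mathcomp Require Import all_classical all_reals all_analysis.
From mathcomp Require Import measurable_realfun.
From mathcomp Require Import ring lra zify.
From Stdlib Require Import Lia.
Import Order.TTheory GRing.Theory Num.Theory.
Import numFieldNormedType.Exports.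
Local Open Scope classical_set_scope.
Local Open Scope ring_scope.


Section Moments.
Variable R : realType.
Variable s : R.
Hypothesis s0 : 0 < s.
Local Notation mu := (@lebesgue_measure R).

Definition psi (x : R) : R := normal_pdf 0 (Num.sqrt s) x.
Let k := normal_peak (Num.sqrt s).

Lemma sg_neq0 : Num.sqrt s != 0.
Proof. by rewrite gt_eqF // sqrtr_gt0. Qed.

Lemma psiE : psi = fun x => k * expR (- (x ^+ 2) / (2 * s)).
Proof.
apply/funext => x; rewrite /psi normal_pdfE ?sg_neq0 // /normal_fun subr0.
by rewrite sqr_sqrtr ?ltW // -mulr_natl.
Qed.

Lemma psi_ge0 (x : R) : 0 <= psi x.
Proof. exact: normal_pdf_ge0. Qed.

Lemma cont_psi : continuous psi.
Proof. exact: continuous_normal_pdf sg_neq0. Qed.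

Lemma meas_psi : measurable_fun setT psi.
Proof. exact: measurable_normal_pdf. Qed.

Lemma int_psi : (\int[mu]_x (psi x)%:E = 1)%E.
Proof. exact: integral_normal_pdf. Qed.

Lemma psiN (x : R) : psi (- x) = psi x.
Proof. by rewrite psiE sqrrN. Qed.

Lemma der_psi (x : R) : is_derive x 1 psi (- (x / s) * psi x).
Proof.
rewrite psiE.
have hg : is_derive x 1 (fun y : R => - (y ^+ 2) / (2 * s)) (- (2 * x) / (2 * s)).
  apply: is_derive_eq.
  by rewrite scaler0 add0r /GRing.scale /= !mulr1; ring.
have he := is_derive1_comp (is_derive_expR _) hg.
apply: is_derive_eq.
rewrite /GRing.scale /=; field.
by rewrite gt_eqF.
Qed.

Lemma derivable_psi (x : R) : derivable psi x 1.
Proof. by have [] := der_psi x. Qed.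

Lemma psi_bound (x : R) : 1 <= x -> x ^+ 3 * psi x <= 8 * s ^+ 2 * k / x.
Proof.
move=> x1.
have x0 : 0 < x by apply: lt_le_trans x1.
set y := x ^+ 2 / (2 * s).
have y0 : 0 <= y by rewrite /y divr_ge0 // ?sqr_ge0 // mulr_ge0 // ltW.
have ey : y ^+ 2 / 2 <= expR y.
  have := expR_ge1Dxn 1 y0; rewrite /= (_ : 2`!%:R = 2) //.
  by apply: le_trans; rewrite lerDr.
rewrite psiE /= -/k.
have -> : - x ^+ 2 / (2 * s) = - y by rewrite /y mulNr.
rewrite expRN.
have k0 : 0 <= k by exact: normal_peak_ge0.
have ey0 : 0 < expR y := expR_gt0 y.
set e := expR y.
have x4 : x ^+ 4 = 8 * s ^+ 2 * (y ^+ 2 / 2).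
  rewrite /y expr_div_n; field; by rewrite gt_eqF.
rewrite (_ : x ^+ 3 * (k * e^-1) = (x ^+ 4 * k) / (x * e)); last first.
  by field; rewrite ?gt_eqF.
rewrite (_ : 8 * s ^+ 2 * k / x = (8 * s ^+ 2 * k * e) / (x * e)); last first.
  by field; rewrite ?gt_eqF.
rewrite ler_pM2r; last by rewrite invr_gt0 mulr_gt0.
have h : 0 <= 8 * s ^+ 2 * k * (e - y ^+ 2 / 2).
  by rewrite mulr_ge0 ?subr_ge0 // mulr_ge0 // mulr_ge0 // sqr_ge0.
rewrite x4; lra.
Qed.


Lemma lim_helper (f g : R -> R) (c l : R) (h : nat -> R) :
  (forall x, 0 <= f x) -> measurable_fun setT f ->
  (forall x, 0 <= g x) -> measurable_fun setT g ->
  (\int[mu]_(x in `[0%R, +oo[) (g x)%:E = l%:E)%E ->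
  h @ \oo --> 0 ->
  (forall n : nat, (0 < n)%N -> \int[mu]_(x in `[0%R, n%:R]) (f x)%:E =
     (h n + c * fine (\int[mu]_(x in `[0%R, n%:R]) (g x)%:E))%:E)%E ->
  (\int[mu]_(x in `[0%R, +oo[) (f x)%:E = (c * l)%:E)%E.
Proof.
move=> f0 mf g0 mg Hl Ch Hn.
have Cg := @ge0_cvgn_integral R mu g g0 mg.
rewrite Hl in Cg.
have Cf := @ge0_cvgn_integral R mu f f0 mf.
have Cu := fine_cvg Cg.
have Cc : (fun n => h n + c * fine (\int[mu]_(x in `[0%R, n%:R]) (g x)%:E)%E) @ \oo --> 0 + c * l.
  apply: cvgD => //; apply: cvgM; first exact: cvg_cst.
  exact: Cu.
rewrite add0r in Cc.
have Ce : (fun n => (h n + c * fine (\int[mu]_(x in `[0%R, n%:R]) (g x)%:E)%E)%:E) @ \oo --> (c * l)%:E.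
  by apply: cvg_EFin; [exact: nearW | exact: Cc].
have Cf' : (fun n => \int[mu]_(x in `[0%R, n%:R]) (f x)%:E)%E @ \oo --> (c * l)%:E.
  apply: cvg_trans Ce; apply: near_eq_cvg; near=> n; apply/esym/Hn; near: n.
  by exists 1%N.
exact: cvg_unique Cf Cf'.
Unshelve. all: by end_near.
Qed.


Lemma dLR (F : R -> R) (a b : R) : (forall x : R, derivable F x 1) ->
  derivable_oo_LRcontinuous F a b.
Proof.
move=> dF.
have cF : continuous F.
  by move=> x; apply: differentiable_continuous; apply/derivable1_diffP.
split.
- by move=> x _; exact: dF.
- exact: cvg_at_right_filter (cF a).
- exact: cvg_at_left_filter (cF b).
Qed.

Lemma sym_int (f : R -> R) (c : R) : (forall x, 0 <= f x) -> continuous f ->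
  (forall x, f (- x) = f x) ->
  (\int[mu]_(x in `[0%R, +oo[) (f x)%:E = c%:E)%E ->
  (\int[mu]_x (f x)%:E = (2 * c)%:E)%E.
Proof.
move=> f0 cf fe H.
rewrite ge0_symfun_integralT //.
  rewrite (_ : [set x | _] = `[0%R, +oo[%classic); last first.
    by apply/seteqP; split => x/=; rewrite in_itv/= andbT.
  by rewrite H -EFinM.
by move=> x /=; rewrite fe.
Qed.

Lemma half0 : (\int[mu]_(x in `[0%R, +oo[) (psi x)%:E = (2^-1)%:E)%E.
Proof.
have := int_psi; rewrite ge0_symfun_integralT //; last 3 first.
- exact: psi_ge0.
- exact: cont_psi.
- by move=> x /=; rewrite psiN.
rewrite (_ : [set x | _] = `[0%R, +oo[%classic); last first.
  by apply/seteqP; split => x/=; rewrite in_itv/= andbT.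
have : (0 <= \int[mu]_(x in `[0%R, +oo[) (psi x)%:E)%E.
  by apply: integral_ge0 => x _; rewrite lee_fin psi_ge0.
case: (\int[mu]_(x in `[0%R, +oo[) (psi x)%:E)%E => [r| |] //= r0.
  move/eqP; rewrite -EFinM eqe => /eqP h.
  congr EFin; have -> : r = 2^-1 * (2 * r) by rewrite mulKf.
  by rewrite h mulr1.
by rewrite mulry gtr0_sg // mul1e.
Qed.

Lemma cvg_pow_psi (j : nat) : (j <= 3)%N -> (0 < j)%N ->
  (fun n : nat => (n%:R) ^+ j * psi n%:R) @ \oo --> 0.
Proof.
move=> j3 j0.
apply: (squeeze_cvgr (f := fun=> 0) (h := fun n => 16 * s ^+ 2 * k * harmonic n)).
- near=> n.
  have n1 : (1 <= n%:R :> R) by rewrite ler1n; near: n; exists 1%N.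
  apply/andP; split.
    by rewrite mulr_ge0 ?psi_ge0 // exprn_ge0 // (le_trans ler01).
  have h1 : n%:R ^+ j * psi n%:R <= n%:R ^+ 3 * psi n%:R.
    apply: ler_wpM2r; first exact: psi_ge0.
    by apply: ler_weXn2l.
  apply: le_trans h1 _.
  apply: le_trans (psi_bound n%:R n1) _.
  rewrite /harmonic /=.
  have k0 : 0 <= k by exact: normal_peak_ge0.
  have n0 : 0 < n%:R :> R by apply: lt_le_trans n1.
  have h8 : 8 / n%:R <= 16 / n.+1%:R :> R.
    rewrite ler_pdivrMr // mulrAC ler_pdivlMr ?ltr0Sn //.
    rewrite -!natrM ler_nat.
    move: n1; rewrite ler1n => n1'; lia.
  rewrite (_ : 8 * s ^+ 2 * k / n%:R = (s ^+ 2 * k) * (8 / n%:R)); last by rewrite /=; ring.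
  rewrite (_ : 16 * s ^+ 2 * k * n.+1%:R^-1 = (s ^+ 2 * k) * (16 / n.+1%:R)); last by rewrite /=; ring.
  by apply: ler_wpM2l => //; rewrite mulr_ge0 // sqr_ge0.
- exact: cvg_cst.
- rewrite -(mulr0 (16 * s ^+ 2 * k)); apply: cvgM; first exact: cvg_cst.
  exact: cvg_harmonic.
Unshelve. all: by end_near.
Qed.


Definition Gm (x : R) : R := - (s * psi x).

Lemma der_Gm (x : R) : is_derive x 1 Gm (x * psi x).
Proof.
rewrite /Gm.
have hp := der_psi x.
apply: is_derive_eq.
rewrite /GRing.scale /=; field; by rewrite gt_eqF.
Qed.

Lemma derivable_Gm (x : R) : derivable Gm x 1.
Proof. by have [] := der_Gm x. Qed.


Lemma cont_xpsi (j : nat) : continuous (fun x : R => x ^+ j * psi x).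
Proof.
move=> x; apply: cvgM; last exact: cont_psi.
exact: exprn_continuous.
Qed.

Lemma integrable_cc (f : R -> R) (a b : R) : continuous f ->
  mu.-integrable `[a, b] (EFin \o f).
Proof.
move=> cf; apply: continuous_compact_integrable; first exact: segment_compact.
exact: continuous_subspaceT.
Qed.

Lemma fin_cc (f : R -> R) (a b : R) : continuous f ->
  (\int[mu]_(x in `[a, b]) (f x)%:E)%E \is a fin_num.
Proof. by move=> cf; apply: integrable_fin_num => //; exact: integrable_cc. Qed.

Lemma ibp_gen (F f : R -> R) (b : R) : 0 < b ->
  (forall x : R, is_derive x 1 F (f x)) -> continuous f ->
  (\int[mu]_(x in `[0%R, b]) (F x * (x * psi x))%:E =
   (F b * Gm b - F 0 * Gm 0)%:E + s%:E * \int[mu]_(x in `[0%R, b]) (f x * psi x)%:E)%E.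
Proof.
move=> b0 dF cf.
rewrite (@integration_by_parts R F Gm f (fun x => x * psi x) 0 b) //; last 6 first.
- exact: continuous_subspaceT.
- by apply: dLR => x; have [] := dF x.
- move=> x _; rewrite derive1E; by have [] := dF x.
- exact: continuous_subspaceT (cont_xpsi 1).
- exact: dLR derivable_Gm.
- by move=> x _; rewrite derive1E; have [] := der_Gm x.
congr (_ + _)%E.
have -> : (\int[mu]_(x in `[0%R, b]) (f x * Gm x)%:E =
    \int[mu]_(x in `[0%R, b]) ((- s)%:E * (f x * psi x)%:E))%E.
  by apply: eq_integral => x _; rewrite -EFinM /Gm; congr EFin; ring.
rewrite integralZl //; last first.
  by apply: (@integrable_cc (fun x => f x * psi x)) => x; apply: cvgM; [exact: cf|exact: cont_psi].
by rewrite EFinN mulNe oppeK.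
Qed.


Lemma meas_xpsi (j : nat) : measurable_fun setT (fun x : R => x ^+ j * psi x).
Proof. exact: continuous_measurable_fun (cont_xpsi j). Qed.

Lemma xpsi_ge0 (j : nat) (x : R) : 0 <= x ^+ (2 * j) * psi x.
Proof. by rewrite mulr_ge0 ?psi_ge0 // mulnC exprM sqr_ge0. Qed.

Lemma H2 : (\int[mu]_(x in `[0%R, +oo[) (x ^+ 2 * psi x)%:E = (s * 2^-1)%:E)%E.
Proof.
apply: (@lim_helper (fun x => x ^+ 2 * psi x) psi s 2^-1
   (fun n => n%:R * Gm n%:R)).
- exact: (xpsi_ge0 1).
- exact: meas_xpsi 2.
- exact: psi_ge0.
- exact: meas_psi.
- exact: half0.
- rewrite (_ : (fun n : nat => n%:R * Gm n%:R) = (fun n : nat => (- s) * (n%:R ^+ 1 * psi n%:R))); last first.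
    by apply/funext => n; rewrite /Gm expr1; ring.
  rewrite -(mulr0 (- s)); apply: cvgM; first exact: cvg_cst.
  exact: cvg_pow_psi.
- move=> n n0.
  have b0 : 0 < n%:R :> R by rewrite ltr0n.
  have := @ibp_gen id (fun=> 1) n%:R b0 (fun x => is_derive_id x 1) (fun x => cvg_cst _).
  have -> : (\int[mu]_(x in `[0%R, n%:R]) (id x * (x * psi x))%:E =
             \int[mu]_(x in `[0%R, n%:R]) (x ^+ 2 * psi x)%:E)%E.
    by apply: eq_integral => x _; rewrite /= expr2 mulrA.
  move=> ->.
  have -> : (\int[mu]_(x in `[0%R, n%:R]) (1 * psi x)%:E =
             \int[mu]_(x in `[0%R, n%:R]) (psi x)%:E)%E.
    by apply: eq_integral => x _; rewrite mul1r.
  rewrite -[X in (_ + _ * X)%E](@fineK _ (\int[mu]_(x in `[0%R, n%:R]) (psi x)%:E)%E); last first.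
    exact: fin_cc cont_psi.
  by rewrite -EFinM -EFinD /= mul0r subr0.
Qed.

Lemma H4 : (\int[mu]_(x in `[0%R, +oo[) (x ^+ 4 * psi x)%:E = (3 * s * (s * 2^-1))%:E)%E.
Proof.
apply: (@lim_helper (fun x => x ^+ 4 * psi x) (fun x => x ^+ 2 * psi x) (3 * s) (s * 2^-1)
   (fun n => n%:R ^+ 3 * Gm n%:R)).
- exact: (xpsi_ge0 2).
- exact: meas_xpsi 4.
- exact: (xpsi_ge0 1).
- exact: meas_xpsi 2.
- exact: H2.
- rewrite (_ : (fun n : nat => n%:R ^+ 3 * Gm n%:R) = (fun n : nat => (- s) * (n%:R ^+ 3 * psi n%:R))); last first.
    by apply/funext => n; rewrite /Gm; ring.
  rewrite -(mulr0 (- s)); apply: cvgM; first exact: cvg_cst.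
  exact: cvg_pow_psi.
- move=> n n0.
  have b0 : 0 < n%:R :> R by rewrite ltr0n.
  have dF : forall x : R, is_derive x 1 (fun y : R => y ^+ 3) (3 * x ^+ 2).
    move=> x; apply: is_derive_eq.
    by rewrite /GRing.scale /= !mulr1; ring.
  have cf : continuous (fun x : R => 3 * x ^+ 2).
    by move=> x; apply: cvgM; [exact: cvg_cst | exact: exprn_continuous].
  have := @ibp_gen (fun y => y ^+ 3) (fun x => 3 * x ^+ 2) n%:R b0 dF cf.
  have -> : (\int[mu]_(x in `[0%R, n%:R]) (x ^+ 3 * (x * psi x))%:E =
             \int[mu]_(x in `[0%R, n%:R]) (x ^+ 4 * psi x)%:E)%E.
    by apply: eq_integral => x _; rewrite mulrA -exprSr.
  move=> ->.
  have -> : (\int[mu]_(x in `[0%R, n%:R]) (3 * x ^+ 2 * psi x)%:E =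
             (3 : R)%:E * \int[mu]_(x in `[0%R, n%:R]) (x ^+ 2 * psi x)%:E)%E.
    under eq_integral do rewrite -mulrA EFinM.
    rewrite integralZl //.
    exact: (@integrable_cc (fun x => x ^+ 2 * psi x)) (cont_xpsi 2).
  rewrite -[X in (_ + _ * (_ * X))%E](@fineK _ (\int[mu]_(x in `[0%R, n%:R]) (x ^+ 2 * psi x)%:E)%E); last first.
    exact: fin_cc (cont_xpsi 2).
  by rewrite -!EFinM -EFinD expr0n /= mul0r subr0 mulrA [s * 3]mulrC.
Qed.


Lemma M2 : (\int[mu]_x (x ^+ 2 * psi x)%:E = s%:E)%E.
Proof.
rewrite (@sym_int _ (s * 2^-1)) //.
- by congr EFin; rewrite mulrC -mulrA mulVf // mulr1.
- exact: (xpsi_ge0 1).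
- exact: cont_xpsi.
- by move=> x; rewrite sqrrN psiN.
- exact: H2.
Qed.

Lemma M4 : (\int[mu]_x (x ^+ 4 * psi x)%:E = (3 * s ^+ 2)%:E)%E.
Proof.
rewrite (@sym_int _ (3 * s * (s * 2^-1))) //.
- by congr EFin; rewrite expr2; field.
- exact: (xpsi_ge0 2).
- exact: cont_xpsi.
- by move=> x; rewrite psiN; congr (_ * _); ring.
- exact: H4.
Qed.

Lemma M0 : (\int[mu]_x (x ^+ 0 * psi x)%:E = 1%:E)%E.
Proof.
rewrite -int_psi; apply: eq_integral => x _; by rewrite expr0 mul1r.
Qed.

End Moments.


Section Two.
Variable R : realType.
Local Notation mu := (@lebesgue_measure R).
Local Notation mu2 := ((@lebesgue_measure R) \x (@lebesgue_measure R))%E.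

Definition HasInt (f : R * R -> R) (a : R) :=
  mu2.-integrable [set: R * R] (EFin \o f) /\
  (\int[mu2]_(z in [set: R * R]) (f z)%:E = a%:E)%E.

Lemma prod_HasInt (f1 f2 : R -> R) (a b : R) :
  measurable_fun setT f1 -> measurable_fun setT f2 ->
  (forall x, 0 <= f1 x) -> (forall x, 0 <= f2 x) ->
  (\int[mu]_x (f1 x)%:E = a%:E)%E -> (\int[mu]_x (f2 x)%:E = b%:E)%E ->
  HasInt (fun z => f1 z.1 * f2 z.2) (a * b).
Proof.
move=> m1 m2 p1 p2 i1 i2.
have p2' : forall x, (0 <= (f2 x)%:E)%E by move=> x; rewrite lee_fin.
have I : (\int[mu2]_(z in [set: R * R]) (f1 z.1 * f2 z.2)%:E = (a * b)%:E)%E.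
  rewrite (@fubini_tonelli1 _ _ _ _ _ mu mu (fun z => (f1 z.1 * f2 z.2)%:E)); last 2 first.
  - apply/measurable_EFinP; apply: measurable_funM.
      exact: measurableT_comp m1 measurable_fst.
    exact: measurableT_comp m2 measurable_snd.
  - by move=> z; rewrite lee_fin mulr_ge0.
  rewrite /fubini_F /=.
  transitivity (\int[mu]_x ((f1 x)%:E * b%:E))%E.
    apply: eq_integral => x _.
    under eq_integral do rewrite EFinM.
    rewrite ge0_integralZl_EFin //; try (by move=> y _; rewrite lee_fin); try exact/measurable_EFinP.
    by congr (_ * _)%E; exact: i2.
  under eq_integral do rewrite -EFinM.
  under eq_integral do rewrite mulrC EFinM.
  rewrite ge0_integralZl_EFin //; try (by move=> y _; rewrite lee_fin); try exact/measurable_EFinP.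
  2: by have := @integral_ge0 _ _ _ mu setT (fun x => (f2 x)%:E) (fun x _ => p2' x); rewrite i2 lee_fin.
  have -> : (\int[mu]_x (f1 x)%:E)%E = a%:E by exact: i1.
  by rewrite -EFinM mulrC.
split => //.
apply/integrableP; split.
  apply/measurable_EFinP; apply: measurable_funM.
    exact: measurableT_comp m1 measurable_fst.
  exact: measurableT_comp m2 measurable_snd.
have pz : forall z : R * R, (0 <= (f1 z.1 * f2 z.2)%:E)%E.
  by move=> z; rewrite lee_fin mulr_ge0.
under eq_integral => z _ do rewrite (gee0_abs (pz z)).
by rewrite I ltry.
Qed.

Lemma HasIntD f g a b : HasInt f a -> HasInt g b -> HasInt (fun z => f z + g z) (a + b).
Proof.
move=> [If Ef] [Ig Eg]; split.
  have := integrableD measurableT If Ig.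
  by apply: eq_integrable => // z _ /=; rewrite EFinD.
under eq_integral do rewrite EFinD.
by rewrite integralD // Ef Eg.
Qed.

Lemma HasIntZ f a c : HasInt f a -> HasInt (fun z => c * f z) (c * a).
Proof.
move=> [If Ef]; split.
  have := integrableZl measurableT c If.
  by apply: eq_integrable => // z _ /=; rewrite EFinM.
under eq_integral do rewrite EFinM.
by rewrite integralZl // Ef -EFinM.
Qed.

End Two.


Lemma gauss2_scalar (R : realType) (d : R) (x : R * R) : 0 < d ->
  gauss2 (d%:M) x = expR (- ((x.1 ^+ 2 + x.2 ^+ 2) / d) / 2) / (2 * pi * d).
Proof.
move=> d0.
rewrite /gauss2 invmx_scalar mul_mx_scalar det_scalar sqrtr_sqr gtr0_norm //.
congr (expR (- _ / 2) / _).
rewrite -scalemxAl mxE !mxE big_ord_recr big_ord_recr big_ord0 /= !mxE /=.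
rewrite add0r mulrC; congr (_ / d); rewrite /=.
Qed.

Definition Wm (R : realType) (a c b : R) : 'M[R]_4 := \matrix_(i < 4, j < 4)
    if i == j then (if (i < 2)%N then a else c)
    else if (((i : nat) + 2 == j) || ((j : nat) + 2 == i))%N then
      (if odd i then - b else b)
    else 0.


Lemma sel_stage (R : realType) (M : 'M[R]_4) :
  bell_select R *m M *m (bell_select R)^T =
  \matrix_(i < 2, j < 2) M (inord i.+1) (inord j.+1).
Proof.
apply/matrixP => i j.
rewrite /bell_select.
case: i => [[|[|i]] Hi] //; case: j => [[|[|j]] Hj] //=.
all: rewrite !mxE !big_ord_recr !big_ord0 /= !mxE.
all: rewrite !big_ord_recr !big_ord0 /= !mxE /=.
all: rewrite /= ?mul0r ?mulr0 ?add0r ?addr0 ?mul1r ?mulr1 //.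
all: try (congr (M _ _); apply: val_inj => /=; rewrite inordK //).

Qed.


Lemma bs_stage (R : realType) (M : 'M[R]_4) :
  let h := (Num.sqrt (2:R))^-1 in
  let B := bs_mat R *m M *m (bs_mat R)^T in
  [/\ B (inord 1) (inord 1) = h^+2 * (M 1 1 + M 1 3 + M 3 1 + M 3 3),
      B (inord 2) (inord 2) = h^+2 * (M 0 0 - M 0 2 - M 2 0 + M 2 2),
      B (inord 1) (inord 2) = h^+2 * (M 1 0 - M 1 2 + M 3 0 - M 3 2) &
      B (inord 2) (inord 1) = h^+2 * (M 0 1 + M 0 3 - M 2 1 - M 2 3)].
Proof.
move=> h B; rewrite /B.
have E1 : (inord 1 : 'I_4) = 1 by apply: val_inj; rewrite /= inordK.
have E2 : (inord 2 : 'I_4) = 2 by apply: val_inj; rewrite /= inordK.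
rewrite E1 E2 /bs_mat.
have o3 : (ord_max : 'I_4) = 3 by apply: val_inj.
have o2 : (widen_ord (leqnSn 3) (ord_max : 'I_3)) = 2 by apply: val_inj.
have o1 : (widen_ord (leqnSn 3) (widen_ord (leqnSn 2) (ord_max : 'I_2))) = 1 by apply: val_inj.
have o0 : (widen_ord (leqnSn 3) (widen_ord (leqnSn 2) (widen_ord (leqnSn 1) (ord_max : 'I_1)))) = 0 by apply: val_inj.
split; rewrite !mxE !big_ord_recr !big_ord0 /= !mxE !big_ord_recr !big_ord0 /= !mxE /=.
all: rewrite ?o3 ?o2 ?o1 ?o0 /h; ring.
Qed.

Lemma chan_out (R : realType) (r kappa nB : R) :
  channel_first kappa nB (tmsv_cov r) =
  Wm R (Num.sqrt kappa ^+ 2 * coshR (2 * r) + (2 * nB + 1 - kappa)) (coshR (2 * r))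
       (Num.sqrt kappa * sinhR (2 * r)).
Proof.
apply/matrixP => i j.
rewrite /channel_first /chanX /chanY /tmsv_cov /Wm.
rewrite !mxE.
rewrite !big_ord_recr !big_ord0 /= !mxE.
rewrite !big_ord_recr !big_ord0 /= !mxE.
case: i => [[|[|[|[|i]]]] Hi] //; case: j => [[|[|[|[|j]]]] Hj] //=.
all: rewrite /= ?mul0r ?mulr0 ?add0r ?addr0 ?mul1r ?mulr1 //.
all: ring.
Qed.

Lemma cov_scalar (R : realType) (r kappa nB : R) :
  bell_outcome_cov r kappa nB =
  (((Num.sqrt 2)^-1) ^+ 2 * ((Num.sqrt kappa ^+ 2 * coshR (2 * r) + (2 * nB + 1 - kappa))
     + coshR (2 * r) - 2 * (Num.sqrt kappa * sinhR (2 * r))))%:M.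
Proof.
rewrite /bell_outcome_cov chan_out sel_stage.
have [B11 B22 B12 B21] := @bs_stage R (Wm R (Num.sqrt kappa ^+ 2 * coshR (2 * r) + (2 * nB + 1 - kappa)) (coshR (2 * r))
       (Num.sqrt kappa * sinhR (2 * r))).
apply/matrixP => i j; rewrite [LHS]mxE [RHS]mxE.
case: i => [[|[|i]] Hi] //; case: j => [[|[|j]] Hj] //=.
- rewrite B11 /Wm !mxE /=; ring.
- rewrite B12 /Wm !mxE /=; ring.
- rewrite B21 /Wm !mxE /=; ring.
- rewrite B22 /Wm !mxE /=; ring.
Qed.


Section Final.
Variable R : realType.
Variable s : R.
Hypothesis s0 : 0 < s.

Let P (i j : nat) (z : R * R) := (z.1 ^+ i * psi R s z.1) * (z.2 ^+ j * psi R s z.2).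

Let mom (i : nat) := if i == 0%N then 1 else if i == 2%N then s else 3 * s ^+ 2.

Let HP (i j : nat) : (i \in [:: 0; 2; 4])%N -> (j \in [:: 0; 2; 4])%N ->
  HasInt R (P i j) (mom i * mom j).
Proof.
have H (n : nat) : (n \in [:: 0; 2; 4])%N ->
   [/\ measurable_fun setT (fun x : R => x ^+ n * psi R s x),
       (forall x : R, 0 <= x ^+ n * psi R s x) &
       (\int[lebesgue_measure]_x (x ^+ n * psi R s x)%:E = (mom n)%:E)%E].
  rewrite !inE => /orP[/eqP->|/orP[/eqP->|/eqP->]].
  - split; [exact (@meas_xpsi R s s0 0%N) | exact (@xpsi_ge0 R s 0%N) | exact (@M0 R s)].
  - split; [exact (@meas_xpsi R s s0 2%N) | exact (@xpsi_ge0 R s 1%N) | exact (@M2 R s s0)].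
  - split; [exact (@meas_xpsi R s s0 4%N) | exact (@xpsi_ge0 R s 2%N) | exact (@M4 R s s0)].
move=> /H [m1 p1 i1] /H [m2 p2 i2].
exact (@prod_HasInt R _ _ _ _ m1 m2 p1 p2 i1 i2).
Qed.

Lemma HasInt_ext (f g : R * R -> R) (a b : R) :
  (forall z, f z = g z) -> a = b -> HasInt R f a -> HasInt R g b.
Proof. by move=> fg <-; have -> : f = g by apply/funext. Qed.

Lemma HasInt_Iz :
  HasInt R (fun z => ((z.1 ^+ 2 + z.2 ^+ 2) / (2 * s ^+ 2) - s^-1) ^+ 2 * (psi R s z.1 * psi R s z.2))
         (s ^+ 2)^-1.
Proof.
have h := HasIntD R _ _ _ _ (HasIntD R _ _ _ _ (HasIntD R _ _ _ _ (HasIntZ R _ _ (4 * s ^+ 4)^-1 (HP 4 0 erefl erefl))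
                                    (HasIntZ R _ _ (2 * s ^+ 4)^-1 (HP 2 2 erefl erefl)))
                           (HasIntD R _ _ _ _ (HasIntZ R _ _ (4 * s ^+ 4)^-1 (HP 0 4 erefl erefl))
                                    (HasIntZ R _ _ (- (s ^+ 3)^-1) (HP 2 0 erefl erefl))))
                  (HasIntD R _ _ _ _ (HasIntZ R _ _ (- (s ^+ 3)^-1) (HP 0 2 erefl erefl))
                           (HasIntZ R _ _ (s ^+ 2)^-1 (HP 0 0 erefl erefl))).
apply: HasInt_ext h.
  move=> z; rewrite /P /=; field.
  by rewrite gt_eqF.
rewrite /mom /=; field.
by rewrite gt_eqF.
Qed.

End Final.


Lemma cosh_sinh2 (R : realType) (r NS : R) : 0 <= NS -> sinhR r = Num.sqrt NS ->
  coshR (2 * r) = 1 + 2 * NS /\ sinhR (2 * r) = 2 * (Num.sqrt NS * Num.sqrt (NS + 1)).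
Proof.
move=> NS0 hr.
set e := expR r.
have e0 : 0 < e := expR_gt0 r.
have E2 : expR (2 * r) = e ^+ 2 by rewrite (_ : 2 * r = r + r) ?expRD ?expr2 //; ring.
have En : expR (- (2 * r)) = (e ^+ 2)^-1 by rewrite expRN E2.
have Er : expR (- r) = e^-1 by rewrite expRN.
have hNS : NS = ((e - e^-1) / 2) ^+ 2.
  by rewrite -(sqr_sqrtr NS0) -hr /sinhR Er.
have hc : Num.sqrt (NS + 1) = (e + e^-1) / 2.
  have -> : NS + 1 = ((e + e^-1) / 2) ^+ 2 by rewrite hNS; field; rewrite gt_eqF.
  rewrite sqrtr_sqr gtr0_norm //; apply: divr_gt0 => //; apply: addr_gt0 => //; by rewrite invr_gt0.
split.
  have h : (e ^+ 2 + (e ^+ 2)^-1) / 2 = 1 + 2 * ((e - e^-1) / 2) ^+ 2.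
    by field; rewrite gt_eqF.
  by rewrite /coshR E2 En hNS; exact h.
have h : (e ^+ 2 - (e ^+ 2)^-1) / 2 = 2 * ((e - e^-1) / 2 * ((e + e^-1) / 2)).
  by field; rewrite gt_eqF.
by rewrite /sinhR E2 En hc -hr /sinhR Er; exact h.
Qed.

Lemma psi_prod (R : realType) (s : R) (s0 : 0 < s) (x : R * R) :
  psi R s x.1 * psi R s x.2 =
  expR (- ((x.1 ^+ 2 + x.2 ^+ 2) / s) / 2) / (2 * pi * s).
Proof.
rewrite (@psiE R s s0) /normal_peak.
have pi0 : 0 < (pi : R) := pi_gt0 R.
set a := Num.sqrt (Num.sqrt s ^+ 2 * pi *+ 2).
have a2 : a ^+ 2 = s * pi * 2.
  rewrite /a sqr_sqrtr; last by rewrite mulrn_wge0 // mulr_ge0 ?sqr_ge0 ?ltW.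
  by rewrite sqr_sqrtr ?ltW // mulr_natr.
have a0 : a != 0.
  apply/eqP => h; move: a2; rewrite h expr0n /= => /esym/eqP.
  by rewrite !mulf_eq0 !gt_eqF.
rewrite mulrACA -expRD -expr2 exprVn a2.
rewrite (_ : - x.1 ^+ 2 / (2 * s) + - x.2 ^+ 2 / (2 * s) = - ((x.1 ^+ 2 + x.2 ^+ 2) / s) / 2).
  by rewrite mulrC; congr (_ * _); congr (_^-1); ring.
by field; rewrite gt_eqF.
Qed.

Theorem mainTheorem7 (R : realType) (NS r kappa nB : R) :
  0 <= NS -> sinhR r = Num.sqrt NS ->
  0 <= kappa -> Num.max (kappa - 1) 0 <= nB ->
  fisher_bell r kappa nB =
    (1 / (nB + kappa * NS - 2 * Num.sqrt (kappa * NS * (NS + 1)) + NS + 1) ^+ 2)%:E.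
Proof.
move=> NS0 hr k0 hnB.
have [hk1 hn0] : kappa - 1 <= nB /\ 0 <= nB.
  by move: hnB; rewrite ge_max => /andP[].
have [ec es] := @cosh_sinh2 R r NS NS0 hr.
set K := kappa * NS - 2 * Num.sqrt (kappa * NS * (NS + 1)) + NS + 1.
have sqK : Num.sqrt (kappa * NS * (NS + 1)) = Num.sqrt kappa * (Num.sqrt NS * Num.sqrt (NS + 1)).
  rewrite sqrtrM ?mulr_ge0 // sqrtrM //.
  by rewrite mulrA.
have cov t : bell_outcome_cov r kappa t = (t + K)%:M.
  rewrite cov_scalar; congr (_%:M).
  rewrite ec es /K sqK exprVn sqr_sqrtr // sqr_sqrtr //.
  by field.
set s := nB + K.
have s0 : 0 < s.
  have a2 : Num.sqrt (kappa * NS) ^+ 2 = kappa * NS by rewrite sqr_sqrtr // mulr_ge0.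
  have b2 : Num.sqrt (NS + 1) ^+ 2 = NS + 1 by rewrite sqr_sqrtr // addr_ge0.
  have sq2 : Num.sqrt (kappa * NS * (NS + 1)) = Num.sqrt (kappa * NS) * Num.sqrt (NS + 1).
    by rewrite sqrtrM // mulr_ge0.
  have -> : s = nB + (Num.sqrt (kappa * NS) - Num.sqrt (NS + 1)) ^+ 2.
    by rewrite /s /K sq2 sqrrB a2 b2; ring.
  have [nBp|] := ltP 0 nB.
    by apply: ltr_pwDl => //; exact: sqr_ge0.
  move=> nBle; have nB0 : nB = 0 by apply/le_anti; rewrite nBle hn0.
  rewrite nB0 add0r exprn_even_gt0 //= subr_eq0; apply/eqP => h.
  have : kappa * NS = NS + 1 by rewrite -a2 -b2 h.
  have : kappa <= 1 by move: hk1; rewrite nB0 subr_le0.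
  move=> kle1 eq1.
  have : kappa * NS <= NS by rewrite ler_piMl.
  by rewrite eq1; lra.
have dens : forall (t : R) (x : R * R), 0 < t + K -> bell_density r kappa t x =
    expR (- ((x.1 ^+ 2 + x.2 ^+ 2) / (t + K)) / 2) / (2 * pi * (t + K)).
  by move=> t x tK; rewrite /bell_density cov gauss2_scalar.
have pi0 : 0 < (pi : R) := pi_gt0 R.
have der : forall x : R * R, derive1 (fun t => ln (bell_density r kappa t x)) nB =
    (x.1 ^+ 2 + x.2 ^+ 2) / (2 * s ^+ 2) - s^-1.
  move=> x; set q := x.1 ^+ 2 + x.2 ^+ 2.
  have nearK : \forall t \near nB, 0 < t + K.
    have : - K < nB by rewrite -subr_gt0 opprK; exact: s0.
    by move=> /lt_nbhsr; apply: filterS => t; rewrite -subr_gt0 opprK.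
  rewrite derive1E.
  rewrite (@near_eq_derive _ _ _ _ (fun t => - (q / (t + K)) / 2 - ln (2 * pi * (t + K)))); last first.
    apply: filterS nearK => t tK.
    rewrite dens // ln_div ?expRK //; rewrite posrE ?expR_gt0 //.
    by rewrite mulr_gt0 // mulr_gt0.
  have sK : nB + K != 0 by rewrite gt_eqF.
  have hl : is_derive nB (1 : R) (fun t : R => t + K) 1.
    by apply: is_derive_eq; rewrite addr0.
  have hV := @is_deriveV _ (fun t : R => t + K) nB 1 1 sK hl.
  have hin : is_derive nB (1 : R) (fun t : R => 2 * pi * (t + K)) (2 * pi).
    apply: is_derive_eq; by rewrite /GRing.scale /= mulr1.
  have hL : is_derive nB (1 : R) ((@ln R) \o (fun t : R => 2 * pi * (t + K))) ((2 * pi * (nB + K))^-1 * (2 * pi)).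
    apply: (is_derive1_comp (f := @ln R) (g := fun t : R => 2 * pi * (t + K)) (x := nB)) => //.
    by apply: is_derive1_ln; rewrite mulr_gt0 // mulr_gt0.
  have hf : is_derive nB (1 : R) (fun t : R => - (q / (t + K)) / 2 - ln (2 * pi * (t + K)))
     (q / (2 * s ^+ 2) - s^-1).
    apply: is_derive_eq.
    rewrite /GRing.scale /= -/s; move: (pi : R) pi0 => p p0.
    by field; rewrite !gt_eqF.
  by rewrite derive_val.
have [_ E] := @HasInt_Iz R s s0.
rewrite /fisher_bell.
have -> : (1 / (nB + kappa * NS - 2 * Num.sqrt (kappa * NS * (NS + 1)) + NS + 1) ^+ 2) = (s ^+ 2)^-1.
  by rewrite div1r /s /K; congr (_ ^+ 2)^-1; ring.
rewrite -E.
apply: eq_integral => z _.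
by rewrite der (dens nB z s0) -(@psi_prod R s s0 z).
Qed.
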